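(* Let $I=\langle Q,D,\tau_{in},\tau_{out}\rangle$ be an instance of DTP, let $C_I$ be its critical domain, $U_I$ its critical update and $Q_I'$ its critical query (as defined in the context). Then DTP holds for $I$ if and only if for every tuple $\vec o$ over $C_I$, $\vec o\in Q_I'(D\cup U_I,\tau_{out})$ implies $\vec o\in Q_I'(D,\tau_{out})$.
   Context: Temporal Datalog. Constants are partitioned into objects and integer time points; variables into object variables and time variables. A time term is a time point, a time variable, or an expression $t+k$ with $t$ a time variable and $k\in\mathbb{Z}$. Each predicate is either extensional (EDB) or intensional (IDB) and has an arity $n\ge0$, each position being of object sort or time sort; a predicate is rigid if all its positions are of object sort, and temporal if its last position is of time sort and all others are of object sort. An atom $P(t_1,\dots,t_n)$ has terms of the required sorts. A rule is $\bigwedge_i\alpha_i\to\alpha$ with $\alpha$ and all $\alpha_i$ rigid or temporal atoms, $\alpha$ IDB whenever the body is nonempty, and every head variable occurring in the body. A program is a finite set of rules. A fact is a ground rigid or temporal atom without $+$ (identified with the rule $\top\to\alpha$); a dataset is a finite set of EDB facts. Rules are read as universally quantified first-order sentences with $+$ interpreted as integer addition; $\Pi\models\alpha$ denotes entailment. A query is $Q=\langle P_Q,\Pi_Q\rangle$ with $\Pi_Q$ a program and $P_Q$ an IDB predicate of $\Pi_Q$; it is temporal if $P_Q$ is temporal. For a temporal query $Q$, dataset $D$ and time point $\tau$, $Q(D,\tau)$ is the set of tuples of objects $\vec o$ with $\Pi_Q\cup D\models P_Q(\vec o,\tau)$. A $\tau_{in}$-history is a dataset consisting of rigid facts and temporal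 facts with time argument $\le\tau_{in}$; a $\tau_{in}$-update is a dataset consisting of temporal facts with time argument $>\tau_{in}$. Definitive Time Point (DTP): an instance is $\langle Q,D,\tau_{in},\tau_{out}\rangle$ with $Q$ a temporal query, $D$ a $\tau_{in}$-history and $\tau_{out}\le\tau_{in}$; DTP holds for it iff $Q(D,\tau_{out})=Q(D\cup U,\tau_{out})$ for every $\tau_{in}$-update $U$. Critical domain: $C_I$ is the set of all objects occurring in $\Pi_Q\cup D$ together with one fresh object $o_I$. Let $\psi$ be the renaming that maps each temporal EDB predicate to a fresh temporal IDB predicate of the same arity. Critical update: with $A$ a fresh unary temporal EDB predicate, $U_I$ is the $\tau_{in}$-update containing $A(\tau_{in}+1)$ and all facts $P(\vec o,\tau_{in}+1)$ for each temporal EDB predicate $P$ of $\Pi_Q$ and each tuple $\vec o$ over $C_I$. Critical query: with $V$ a fresh unary temporal IDB predicate, $Q_I'=\langle P_Q,\Pi'\rangle$ where $\Pi'$ consists of $\psi(\Pi_Q)$ together with the rules $A(t)\to V(t)$, $V(t)\to V(t+1)$, and, for each temporal EDB predicate $P$ of $\Pi_Q$ with $P'=\psi(P)$, the rules $P(\vec x,t)\to P'(\vec x,t)$ and $V(t+1)\wedge P'(\vec x,t)\to P'(\vec x,t+1)$. *)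

(* Defs.v *)
From Stdlib Require Import ZArith List Bool Arith.
Import ListNotations.

Inductive sort := SObj | STime.

Definition is_obj_sort (s : sort) : bool :=
  match s with SObj => true | STime => false end.

(** A predicate: a name, the list of sorts of its positions (its arity is the
    length), and a flag saying whether it is intensional (IDB) or extensional
    (EDB).  Predicates are identified with the whole record. *)
Record pred := Pred { pname : nat; psig : list sort; pidb : bool }.

Definition arity (P : pred) : nat := length (psig P).

Definition is_rigid (P : pred) : bool := forallb is_obj_sort (psig P).

Definition is_temporal (P : pred) : bool :=
  match rev (psig P) with
  | STime :: r => forallb is_obj_sort r
  | _ => false
  end.

Definition is_temporal_edb (P : pred) : bool := is_temporal P && negb (pidb P).

(** Objects are constants [OConst o] (o : nat), time points are integers.
    Object variables and time variables live in separate namespaces.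
    [TShift x k] is the time term [x + k]. *)
Inductive term :=
| OConst (o : nat)
| OVar (x : nat)
| TConst (z : Z)
| TVar (x : nat)
| TShift (x : nat) (k : Z).

Definition term_sort (t : term) : sort :=
  match t with OConst _ | OVar _ => SObj | _ => STime end.

Definition term_vars (t : term) : list (sort * nat) :=
  match t with
  | OVar x => [(SObj, x)]
  | TVar x | TShift x _ => [(STime, x)]
  | _ => []
  end.

Record atom := Atom { apred : pred; aargs : list term }.

Definition atom_vars (a : atom) : list (sort * nat) := flat_map term_vars (aargs a).

Definition atom_wf (a : atom) : Prop :=
  map term_sort (aargs a) = psig (apred a) /\
  (is_rigid (apred a) || is_temporal (apred a)) = true.

Record rule := Rule { rbody : list atom; rhead : atom }.

Definition rule_wf (r : rule) : Prop :=
  Forall atom_wf (rhead r :: rbody r) /\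
  (rbody r <> [] -> pidb (apred (rhead r)) = true) /\
  (forall v, In v (atom_vars (rhead r)) ->
     exists b, In b (rbody r) /\ In v (atom_vars b)).

Definition program := list rule.

Definition program_wf (Pi : program) : Prop := Forall rule_wf Pi.

Definition prog_preds (Pi : program) : list pred :=
  flat_map (fun r => map apred (rhead r :: rbody r)) Pi.

Definition is_const_term (t : term) : Prop :=
  match t with OConst _ | TConst _ => True | _ => False end.

Definition is_fact (a : atom) : Prop := atom_wf a /\ Forall is_const_term (aargs a).

Definition dataset := list atom.

Definition is_dataset (D : dataset) : Prop :=
  Forall (fun a => is_fact a /\ pidb (apred a) = false) D.

Definition data_preds (D : dataset) : list pred := map apred D.

Definition time_arg_le (a : atom) (tau : Z) : Prop :=
  exists z, last (aargs a) (OConst 0) = TConst z /\ (z <= tau)%Z.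
Definition time_arg_gt (a : atom) (tau : Z) : Prop :=
  exists z, last (aargs a) (OConst 0) = TConst z /\ (tau < z)%Z.

Definition is_history (tin : Z) (D : dataset) : Prop :=
  is_dataset D /\
  forall f, In f D ->
    is_rigid (apred f) = true \/
    (is_temporal (apred f) = true /\ time_arg_le f tin).

Definition is_update (tin : Z) (U : dataset) : Prop :=
  is_dataset U /\
  forall f, In f U -> is_temporal (apred f) = true /\ time_arg_gt f tin.

(** * First-order semantics (time sort interpreted as Z with +) *)

Record interp := Interp {
  dom : Type;
  cst : nat -> dom;
  rel : pred -> list (dom + Z) -> Prop }.

Definition eval_term (M : interp) (ov : nat -> dom M) (tv : nat -> Z) (t : term)
  : dom M + Z :=
  match t with
  | OConst o => inl (cst M o)
  | OVar x => inl (ov x)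
  | TConst z => inr z
  | TVar x => inr (tv x)
  | TShift x k => inr (tv x + k)%Z
  end.

Definition holds (M : interp) (ov : nat -> dom M) (tv : nat -> Z) (a : atom) : Prop :=
  rel M (apred a) (map (eval_term M ov tv) (aargs a)).

Definition sat_rule (M : interp) (r : rule) : Prop :=
  forall ov tv, (forall b, In b (rbody r) -> holds M ov tv b) -> holds M ov tv (rhead r).

(** [Pi ∪ D ⊨ alpha]; facts are identified with bodiless rules *)
Definition entails (Pi : program) (D : dataset) (alpha : atom) : Prop :=
  forall M : interp,
    (forall r, In r Pi -> sat_rule M r) ->
    (forall f, In f D -> sat_rule M (Rule [] f)) ->
    forall ov tv, holds M ov tv alpha.

Record query := Query { qpred : pred; qprog : program }.

Definition query_wf (Q : query) : Prop :=
  program_wf (qprog Q) /\ pidb (qpred Q) = true /\ In (qpred Q) (prog_preds (qprog Q)).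

Definition temporal_query (Q : query) : Prop :=
  query_wf Q /\ is_temporal (qpred Q) = true.

Definition answer (Q : query) (D : dataset) (tau : Z) (os : list nat) : Prop :=
  length os = arity (qpred Q) - 1 /\
  entails (qprog Q) D (Atom (qpred Q) (map OConst os ++ [TConst tau])).

Definition dtp_instance (Q : query) (D : dataset) (tin tout : Z) : Prop :=
  temporal_query Q /\ is_history tin D /\ (tout <= tin)%Z.

Definition dtp_holds (Q : query) (D : dataset) (tin tout : Z) : Prop :=
  forall U, is_update tin U ->
    forall os, answer Q D tout os <-> answer Q (D ++ U) tout os.

Definition obj_in_atom (o : nat) (a : atom) : Prop := In (OConst o) (aargs a).

Definition obj_in_prog (o : nat) (Pi : program) : Prop :=
  exists r, In r Pi /\ exists a, In a (rhead r :: rbody r) /\ obj_in_atom o a.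

Definition obj_in_data (o : nat) (D : dataset) : Prop :=
  exists a, In a D /\ obj_in_atom o a.

Definition in_crit_dom (Q : query) (D : dataset) (oI : nat) (o : nat) : Prop :=
  obj_in_prog o (qprog Q) \/ obj_in_data o D \/ o = oI.

Definition fresh_obj (Q : query) (D : dataset) (oI : nat) : Prop :=
  ~ obj_in_prog oI (qprog Q) /\ ~ obj_in_data oI D.

Definition tedb_preds (Pi : program) : list pred :=
  filter is_temporal_edb (prog_preds Pi).

Definition fresh_pred (Q : query) (D : dataset) (P : pred) : Prop :=
  ~ In P (prog_preds (qprog Q)) /\ ~ In P (data_preds D).

Definition critical_preds (Q : query) (D : dataset) (A V : pred) (psi : pred -> pred) : Prop :=
  (psig A = [STime] /\ pidb A = false /\ fresh_pred Q D A) /\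
  (psig V = [STime] /\ pidb V = true /\ fresh_pred Q D V) /\
  A <> V /\
  (forall P, In P (tedb_preds (qprog Q)) ->
     psig (psi P) = psig P /\ pidb (psi P) = true /\ fresh_pred Q D (psi P) /\
     psi P <> A /\ psi P <> V) /\
  (forall P1 P2, In P1 (tedb_preds (qprog Q)) -> In P2 (tedb_preds (qprog Q)) ->
     psi P1 = psi P2 -> P1 = P2).

(** the critical update U_I, characterised as a set (list up to membership) *)
Definition is_critical_update (Q : query) (D : dataset) (tin : Z) (oI : nat)
    (A : pred) (UI : dataset) : Prop :=
  forall f, In f UI <->
    f = Atom A [TConst (tin + 1)] \/
    exists P os, In P (tedb_preds (qprog Q)) /\
      length os = arity P - 1 /\ Forall (in_crit_dom Q D oI) os /\
      f = Atom P (map OConst os ++ [TConst (tin + 1)]).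

Definition ren_pred (psi : pred -> pred) (P : pred) : pred :=
  if is_temporal_edb P then psi P else P.

Definition ren_atom (psi : pred -> pred) (a : atom) : atom :=
  Atom (ren_pred psi (apred a)) (aargs a).

Definition ren_rule (psi : pred -> pred) (r : rule) : rule :=
  Rule (map (ren_atom psi) (rbody r)) (ren_atom psi (rhead r)).

(** object variables x_0 .. x_{n-1}; the time variable t is TVar 0 *)
Definition ovars (n : nat) : list term := map OVar (seq 0 n).

Definition copy_rules (V : pred) (psi : pred -> pred) (P : pred) : list rule :=
  let xs := ovars (arity P - 1) in
  [ Rule [Atom P (xs ++ [TVar 0])] (Atom (psi P) (xs ++ [TVar 0]));
    Rule [Atom V [TShift 0 1]; Atom (psi P) (xs ++ [TVar 0])]
         (Atom (psi P) (xs ++ [TShift 0 1])) ].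

Definition critical_program (Q : query) (A V : pred) (psi : pred -> pred) : program :=
  map (ren_rule psi) (qprog Q) ++
  [ Rule [Atom A [TVar 0]] (Atom V [TVar 0]);
    Rule [Atom V [TVar 0]] (Atom V [TShift 0 1]) ] ++
  flat_map (copy_rules V psi) (tedb_preds (qprog Q)).

Definition critical_query (Q : query) (A V : pred) (psi : pred -> pred) : query :=
  Query (qpred Q) (critical_program Q A V psi).

(* Main.v *)
Require Import Defs.
From Stdlib Require Import ZArith List Lia Bool Arith ClassicalDescription.
Import ListNotations.

Definition ev (ov : nat -> nat) (tv : nat -> Z) (t : term) : nat + Z :=
  match t with OConst o => inl o | OVar x => inl (ov x) | TConst z => inr z
  | TVar x => inr (tv x) | TShift x k => inr (tv x + k)%Z end.

Inductive der (Pi : program) (E : dataset) : pred -> list (nat + Z) -> Prop :=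
| der_fact : forall e ov tv, In e E -> der Pi E (apred e) (map (ev ov tv) (aargs e))
| der_rule : forall r ov tv, In r Pi ->
    (forall b, In b (rbody r) -> der Pi E (apred b) (map (ev ov tv) (aargs b))) ->
    der Pi E (apred (rhead r)) (map (ev ov tv) (aargs (rhead r))).

Lemma der_rule_eq Pi E r ov tv P vals : In r Pi ->
  (forall b, In b (rbody r) -> der Pi E (apred b) (map (ev ov tv) (aargs b))) ->
  P = apred (rhead r) -> vals = map (ev ov tv) (aargs (rhead r)) -> der Pi E P vals.
Proof. intros; subst; eapply der_rule; eauto. Qed.

Lemma der_fact_eq Pi E e ov tv P vals : In e E ->
  P = apred e -> vals = map (ev ov tv) (aargs e) -> der Pi E P vals.
Proof. intros; subst; eapply der_fact; eauto. Qed.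

Lemma der_mono Pi E E' P v : (forall e, In e E -> In e E') -> der Pi E P v -> der Pi E' P v.
Proof.
  intros Hi H; induction H.
  - apply der_fact; auto.
  - apply der_rule; auto.
Qed.

Definition HM (Pi : program) (E : dataset) : interp := Interp nat (fun o => o) (der Pi E).

Lemma map_eval_HM Pi E ov tv l :
  map (eval_term (HM Pi E) ov tv) l = map (ev ov tv) l.
Proof. apply map_ext; intros []; reflexivity. Qed.

Lemma ev_const_args ov tv os z :
  map (ev ov tv) (map OConst os ++ [TConst z]) = map inl os ++ [inr z].
Proof. rewrite map_app, map_map; reflexivity. Qed.

Lemma holds_HM Pi E ov tv a :
  holds (HM Pi E) ov tv a <-> der Pi E (apred a) (map (ev ov tv) (aargs a)).
Proof. unfold holds. rewrite map_eval_HM. reflexivity. Qed.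

Lemma entails_der Pi E P os z :
  entails Pi E (Atom P (map OConst os ++ [TConst z])) -> der Pi E P (map inl os ++ [inr z]).
Proof.
  intro H.
  specialize (H (HM Pi E)).
  assert (H1 : forall r, In r Pi -> sat_rule (HM Pi E) r).
  { intros r Hr ov tv Hb. apply holds_HM.
    apply der_rule; auto. }
  assert (H2 : forall f, In f E -> sat_rule (HM Pi E) (Rule [] f)).
  { intros f Hf ov tv _. apply holds_HM. apply der_fact; auto. }
  specialize (H H1 H2 (fun _ => 0) (fun _ => 0%Z)).
  apply holds_HM in H. simpl in H. rewrite ev_const_args in H. exact H.
Qed.

Definition lift (M : interp) (v : nat + Z) : dom M + Z :=
  match v with inl o => inl (cst M o) | inr z => inr z end.

Lemma eval_lift M ov tv t : eval_term M (fun x => cst M (ov x)) tv t = lift M (ev ov tv t).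
Proof. destruct t; reflexivity. Qed.

Lemma der_sound Pi E P vals : der Pi E P vals -> forall M : interp,
    (forall r, In r Pi -> sat_rule M r) ->
    (forall f, In f E -> sat_rule M (Rule [] f)) ->
    rel M P (map (lift M) vals).
Proof.
  intro H; induction H; intros M Hr Hf.
  - specialize (Hf e H (fun x => cst M (ov x)) tv). unfold holds in Hf.
    rewrite (map_ext _ _ (eval_lift M ov tv)), <- map_map in Hf. apply Hf. simpl; tauto.
  - pose proof (Hr r H (fun x => cst M (ov x)) tv) as Hr'. unfold holds in Hr'.
    rewrite (map_ext _ _ (eval_lift M ov tv)), <- map_map in Hr'. apply Hr'.
    intros b Hb. unfold holds. rewrite (map_ext _ _ (eval_lift M ov tv)), <- map_map.
    apply H1; auto.
Qed.

Lemma der_entails Pi E P os z :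
  der Pi E P (map inl os ++ [inr z]) -> entails Pi E (Atom P (map OConst os ++ [TConst z])).
Proof.
  intros H M Hr Hf ov tv. unfold holds. simpl.
  pose proof (der_sound _ _ _ _ H M Hr Hf) as H'.
  rewrite map_app in H' |- *. simpl in *. rewrite !map_map in *. exact H'.
Qed.

Lemma answer_iff Q E tau os : answer Q E tau os <->
  length os = arity (qpred Q) - 1 /\ der (qprog Q) E (qpred Q) (map inl os ++ [inr tau]).
Proof.
  unfold answer; split; intros [H1 H2]; split; auto.
  - apply entails_der; auto.
  - apply der_entails; auto.
Qed.

Lemma forallb_obj l : forallb is_obj_sort l = true -> l = repeat SObj (length l).
Proof.
  induction l as [|s l IH]; simpl; auto. intro H. apply andb_prop in H as [H1 H2].
  destruct s; try discriminate. f_equal; auto.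
Qed.

Lemma temporal_sig P : is_temporal P = true -> psig P = repeat SObj (arity P - 1) ++ [STime].
Proof.
  unfold is_temporal, arity. destruct (rev (psig P)) eqn:E; [discriminate|].
  destruct s; [discriminate|]. intro Hf.
  assert (Hp : psig P = rev l ++ [STime]).
  { rewrite <- (rev_involutive (psig P)), E. reflexivity. }
  rewrite Hp, length_app, length_rev. simpl. replace (length l + 1 - 1) with (length l) by lia.
  rewrite (forallb_obj _ Hf) at 1. rewrite rev_repeat. reflexivity.
Qed.

Lemma args_struct n args : Forall is_const_term args ->
  map term_sort args = repeat SObj n ++ [STime] ->
  exists os z, args = map OConst os ++ [TConst z] /\ length os = n.
Proof.
  revert args; induction n as [|n IH]; intros args Hc Hs.
  - destruct args as [|t [|t' args]]; simpl in Hs; try discriminate.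
    inversion Hs. inversion Hc; subst. destruct t; simpl in *; try discriminate; try contradiction.
    exists [], z. auto.
  - destruct args as [|t args]; simpl in Hs; try discriminate.
    inversion Hs. inversion Hc; subst. rewrite H0 in H1.
    destruct (IH args H4 H1) as (os & z & -> & Hl).
    destruct t; simpl in *; try discriminate; try contradiction.
    exists (o :: os), z. simpl; auto.
Qed.

Lemma fact_struct e : is_fact e -> is_temporal (apred e) = true ->
  exists os z, aargs e = map OConst os ++ [TConst z] /\ length os = arity (apred e) - 1.
Proof.
  intros [[Hs _] Hc] Ht. apply args_struct; auto. rewrite Hs. apply temporal_sig; auto.
Qed.

Lemma sort_consts l : map term_sort (map OConst l) = repeat SObj (length l).
Proof. induction l; simpl; f_equal; auto. Qed.

Lemma nth_seq_map (os : list nat) :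
  map (fun i => @inl nat Z (nth i os 0)) (seq 0 (length os)) = map inl os.
Proof.
  induction os as [|a os IH]; simpl; auto. f_equal.
  rewrite <- seq_shift, map_map. simpl. exact IH.
Qed.

Lemma in_tedb Pi P : In P (tedb_preds Pi) <-> In P (prog_preds Pi) /\ is_temporal_edb P = true.
Proof. unfold tedb_preds. apply filter_In. Qed.

Lemma head_in_preds Pi r : In r Pi -> In (apred (rhead r)) (prog_preds Pi).
Proof. intro H. unfold prog_preds. apply in_flat_map. exists r. simpl; auto. Qed.

Lemma body_in_preds Pi r b : In r Pi -> In b (rbody r) -> In (apred b) (prog_preds Pi).
Proof. intros H Hb. unfold prog_preds. apply in_flat_map. exists r. split; auto.
  simpl. right. apply in_map; auto. Qed.

Definition c1 (psi : pred -> pred) (P : pred) : rule :=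
  Rule [Atom P (ovars (arity P - 1) ++ [TVar 0])] (Atom (psi P) (ovars (arity P - 1) ++ [TVar 0])).
Definition c2 (V : pred) (psi : pred -> pred) (P : pred) : rule :=
  Rule [Atom V [TShift 0 1]; Atom (psi P) (ovars (arity P - 1) ++ [TVar 0])]
       (Atom (psi P) (ovars (arity P - 1) ++ [TShift 0 1])).

Lemma CP_cases Q A V psi r : In r (critical_program Q A V psi) ->
  (exists r0, In r0 (qprog Q) /\ r = ren_rule psi r0) \/
  r = Rule [Atom A [TVar 0]] (Atom V [TVar 0]) \/
  r = Rule [Atom V [TVar 0]] (Atom V [TShift 0 1]) \/
  (exists P, In P (tedb_preds (qprog Q)) /\ (r = c1 psi P \/ r = c2 V psi P)).
Proof.
  unfold critical_program. intro H. apply in_app_or in H as [H|H].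
  - left. apply in_map_iff in H as (r0 & <- & H). eauto.
  - simpl in H. destruct H as [<-|[<-|H]]; auto.
    right; right; right. apply in_flat_map in H as (P & HP & H).
    exists P; split; auto. simpl in H. unfold c1, c2. destruct H as [<-|[<-|[]]]; auto.
Qed.

Lemma CP_ren Q A V psi r : In r (qprog Q) -> In (ren_rule psi r) (critical_program Q A V psi).
Proof. intro H. unfold critical_program. apply in_or_app; left. apply in_map; auto. Qed.
Lemma CP_AV Q A V psi : In (Rule [Atom A [TVar 0]] (Atom V [TVar 0])) (critical_program Q A V psi).
Proof. unfold critical_program. apply in_or_app; right. simpl; auto. Qed.
Lemma CP_VV Q A V psi : In (Rule [Atom V [TVar 0]] (Atom V [TShift 0 1])) (critical_program Q A V psi).
Proof. unfold critical_program. apply in_or_app; right. simpl; auto. Qed.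
Lemma CP_c1 Q A V psi P : In P (tedb_preds (qprog Q)) -> In (c1 psi P) (critical_program Q A V psi).
Proof. intro H. unfold critical_program. apply in_or_app; right. simpl; right; right.
  apply in_flat_map. exists P. split; auto. simpl; auto. Qed.
Lemma CP_c2 Q A V psi P : In P (tedb_preds (qprog Q)) -> In (c2 V psi P) (critical_program Q A V psi).
Proof. intro H. unfold critical_program. apply in_or_app; right. simpl; right; right.
  apply in_flat_map. exists P. split; auto. simpl; auto. Qed.

Lemma ev_ovars ov tv n s :
  map (ev ov tv) (ovars n ++ [s]) = map (fun i => inl (ov i)) (seq 0 n) ++ [ev ov tv s].
Proof. unfold ovars. rewrite map_app, map_map. reflexivity. Qed.

Lemma copy1_app Q A V psi F P os z : In P (tedb_preds (qprog Q)) -> length os = arity P - 1 ->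
  der (critical_program Q A V psi) F P (map inl os ++ [inr z]) ->
  der (critical_program Q A V psi) F (psi P) (map inl os ++ [inr z]).
Proof.
  intros HP Hl H.
  apply (der_rule_eq _ _ (c1 psi P) (fun i => nth i os 0) (fun _ => z)).
  - apply CP_c1; auto.
  - intros b [<-|[]]. simpl. rewrite ev_ovars, <- Hl, nth_seq_map. exact H.
  - reflexivity.
  - simpl. rewrite ev_ovars, <- Hl, nth_seq_map. reflexivity.
Qed.

Lemma copy2_app Q A V psi F P os z : In P (tedb_preds (qprog Q)) -> length os = arity P - 1 ->
  der (critical_program Q A V psi) F V [inr (z + 1)%Z] ->
  der (critical_program Q A V psi) F (psi P) (map inl os ++ [inr z]) ->
  der (critical_program Q A V psi) F (psi P) (map inl os ++ [inr (z + 1)%Z]).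
Proof.
  intros HP Hl HV H.
  apply (der_rule_eq _ _ (c2 V psi P) (fun i => nth i os 0) (fun _ => z)).
  - apply CP_c2; auto.
  - intros b [<-|[<-|[]]]; simpl.
    + exact HV.
    + rewrite ev_ovars, <- Hl, nth_seq_map. exact H.
  - reflexivity.
  - simpl. rewrite ev_ovars, <- Hl, nth_seq_map. reflexivity.
Qed.

Lemma V_of_A Q A V psi F z : der (critical_program Q A V psi) F A [inr z] ->
  der (critical_program Q A V psi) F V [inr z].
Proof.
  intro H. apply (der_rule_eq _ _ _ (fun _ => 0) (fun _ => z) _ _ (CP_AV Q A V psi)).
  - intros b [<-|[]]. exact H.
  - reflexivity.
  - reflexivity.
Qed.

Lemma V_step Q A V psi F z : der (critical_program Q A V psi) F V [inr z] ->
  der (critical_program Q A V psi) F V [inr (z + 1)%Z].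
Proof.
  intro H. apply (der_rule_eq _ _ _ (fun _ => 0) (fun _ => z) _ _ (CP_VV Q A V psi)).
  - intros b [<-|[]]. exact H.
  - reflexivity.
  - reflexivity.
Qed.

Lemma V_all Q A V psi F z : der (critical_program Q A V psi) F V [inr z] ->
  forall n, der (critical_program Q A V psi) F V [inr (z + Z.of_nat n)%Z].
Proof.
  intros H n. induction n.
  - rewrite Z.add_0_r. exact H.
  - replace (z + Z.of_nat (S n))%Z with ((z + Z.of_nat n) + 1)%Z by lia. apply V_step; auto.
Qed.

Lemma psi_all Q A V psi F P os z : In P (tedb_preds (qprog Q)) -> length os = arity P - 1 ->
  (forall n, der (critical_program Q A V psi) F V [inr (z + Z.of_nat n)%Z]) ->
  der (critical_program Q A V psi) F (psi P) (map inl os ++ [inr z]) ->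
  forall n, der (critical_program Q A V psi) F (psi P) (map inl os ++ [inr (z + Z.of_nat n)%Z]).
Proof.
  intros HP Hl HV H n. induction n.
  - rewrite Z.add_0_r. exact H.
  - replace (z + Z.of_nat (S n))%Z with ((z + Z.of_nat n) + 1)%Z by lia.
    apply copy2_app; auto. replace ((z + Z.of_nat n) + 1)%Z with (z + Z.of_nat (S n))%Z by lia.
    auto.
Qed.

Lemma crit_ne Q D A V psi P : critical_preds Q D A V psi -> In P (prog_preds (qprog Q)) ->
  P <> A /\ P <> V /\ (forall R, In R (tedb_preds (qprog Q)) -> P <> psi R).
Proof.
  intros (HA & HV & HAV & Hpsi & Hinj) HP.
  destruct HA as (_ & _ & HA1 & _). destruct HV as (_ & _ & HV1 & _).
  split; [|split].
  - intros ->; auto.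
  - intros ->; auto.
  - intros R HR ->. destruct (Hpsi R HR) as (_ & _ & [Hf _] & _). auto.
Qed.

Lemma crit_ne_data Q D A V psi e : critical_preds Q D A V psi -> In e D ->
  apred e <> A /\ apred e <> V /\ (forall R, In R (tedb_preds (qprog Q)) -> apred e <> psi R).
Proof.
  intros (HA & HV & HAV & Hpsi & Hinj) He.
  assert (Hd : In (apred e) (data_preds D)) by (apply in_map; auto).
  destruct HA as (_ & _ & _ & HA1). destruct HV as (_ & _ & _ & HV1).
  split; [|split].
  - intros Hq; rewrite Hq in Hd; auto.
  - intros Hq; rewrite Hq in Hd; auto.
  - intros R HR Hq. destruct (Hpsi R HR) as (_ & _ & [_ Hf] & _). rewrite Hq in Hd; auto.
Qed.

Lemma psi_ne Q D A V psi R : critical_preds Q D A V psi -> In R (tedb_preds (qprog Q)) ->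
  psi R <> A /\ psi R <> V.
Proof. intros (_ & _ & _ & Hpsi & _) HR. destruct (Hpsi R HR) as (_ & _ & _ & ? & ?); auto. Qed.

Lemma is_update_nil tin : is_update tin [].
Proof. split. constructor. intros f []. Qed.

Lemma is_update_app tin U1 U2 : is_update tin U1 -> is_update tin U2 -> is_update tin (U1 ++ U2).
Proof.
  intros [H1 H2] [H3 H4]. split.
  - apply Forall_app; auto.
  - intros f Hf. apply in_app_or in Hf as [Hf|Hf]; auto.
Qed.

Lemma upd_fact tin P os z : is_temporal P = true -> pidb P = false -> length os = arity P - 1 ->
  (tin < z)%Z -> is_update tin [Atom P (map OConst os ++ [TConst z])].
Proof.
  intros Ht Hp Hl Hz. split.
  - constructor; [|constructor]. split; [split; [split|]|]; simpl.
    + rewrite temporal_sig by auto. rewrite map_app, sort_consts, Hl. reflexivity.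
    + rewrite Ht, orb_true_r. reflexivity.
    + apply Forall_app; split; [|repeat constructor].
      apply Forall_forall. intros x Hx. apply in_map_iff in Hx as (o & <- & _). simpl; auto.
    + exact Hp.
  - intros f [<-|[]]. split; simpl; auto. exists z. split; auto. apply last_last.
Qed.

Lemma tedb_props Pi P : In P (tedb_preds Pi) -> is_temporal P = true /\ pidb P = false /\
  In P (prog_preds Pi).
Proof.
  intro H. apply in_tedb in H as [H1 H2]. unfold is_temporal_edb in H2.
  apply andb_prop in H2 as [H2 H3]. apply negb_true_iff in H3. auto.
Qed.

Definition G Q D tin (X : dataset) P vals := exists U, is_update tin U /\ (X = [] -> U = []) /\
  der (qprog Q) (D ++ U) P vals.

Lemma combineU Q D tin X ov tv l :
  (forall b, In b l -> G Q D tin X (apred b) (map (ev ov tv) (aargs b))) ->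
  exists U, is_update tin U /\ (X = [] -> U = []) /\
    forall b, In b l -> der (qprog Q) (D ++ U) (apred b) (map (ev ov tv) (aargs b)).
Proof.
  induction l as [|a l IH]; intro H.
  - exists []. split; [apply is_update_nil|]. split; auto. intros b [].
  - destruct (H a (or_introl eq_refl)) as (U1 & Hu1 & Hx1 & Hd1).
    destruct IH as (U2 & Hu2 & Hx2 & Hd2). { intros b Hb. apply H. right; auto. }
    exists (U1 ++ U2). split; [apply is_update_app; auto|]. split.
    + intro Hx. rewrite Hx1, Hx2; auto.
    + intros b [<-|Hb].
      * eapply der_mono; [|exact Hd1]. intros e He. apply in_app_or in He as [He|He];
        apply in_or_app; auto. right; apply in_or_app; auto.
      * eapply der_mono; [|exact (Hd2 b Hb)]. intros e He. apply in_app_or in He as [He|He];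
        apply in_or_app; auto. right; apply in_or_app; auto.
Qed.

Definition Inv Q D tin (A V : pred) psi X P (vals : list (nat + Z)) :=
 (P = A -> X <> [] /\ vals = [inr (tin+1)%Z]) /\
 (P = V -> X <> [] /\ exists z, vals = [inr z] /\ (tin + 1 <= z)%Z) /\
 (forall R, In R (tedb_preds (qprog Q)) -> P = psi R -> G Q D tin X R vals) /\
 ((forall R, In R (tedb_preds (qprog Q)) -> P <> psi R) -> P <> A -> P <> V -> G Q D tin X P vals).

Lemma inj_psi Q D A V psi P R : critical_preds Q D A V psi ->
  In P (tedb_preds (qprog Q)) -> In R (tedb_preds (qprog Q)) -> psi P = psi R -> R = P.
Proof. intros (_ & _ & _ & _ & Hinj) H1 H2 H3. symmetry; apply Hinj; auto. Qed.

Lemma Inv_psi Q D tin A V psi X P vals : critical_preds Q D A V psi ->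
  In P (tedb_preds (qprog Q)) -> G Q D tin X P vals -> Inv Q D tin A V psi X (psi P) vals.
Proof.
  intros Hc HP HG. destruct (psi_ne _ _ _ _ _ _ Hc HP) as [H1 H2].
  split; [|split; [|split]].
  - intro; contradiction.
  - intro; contradiction.
  - intros R HR Heq. rewrite (inj_psi _ _ _ _ _ _ _ Hc HP HR Heq). auto.
  - intros H; exfalso; apply (H P HP); auto.
Qed.

Lemma Inv_plain Q D tin A V psi X P vals : critical_preds Q D A V psi ->
  In P (prog_preds (qprog Q)) -> G Q D tin X P vals -> Inv Q D tin A V psi X P vals.
Proof.
  intros Hc HP HG. destruct (crit_ne _ _ _ _ _ _ Hc HP) as (H1 & H2 & H3).
  split; [|split; [|split]].
  - intro; contradiction.
  - intro; contradiction.
  - intros R HR Heq. exfalso; apply (H3 R HR Heq).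
  - auto.
Qed.

Lemma unren Q D tin oI A V psi UI X :
  critical_preds Q D A V psi -> is_critical_update Q D tin oI A UI ->
  (forall e, In e X -> In e UI) ->
  forall P vals, der (critical_program Q A V psi) (D ++ X) P vals ->
  Inv Q D tin A V psi X P vals.
Proof.
  intros Hc HUI HX P vals H.
  pose proof Hc as (HA & HV & HAV & Hpsi & Hinj).
  induction H as [e ov tv He | r ov tv Hr Hb IH].
  - apply in_app_or in He as [He|He].
    + destruct (crit_ne_data _ _ _ _ _ _ Hc He) as (H1 & H2 & H3).
      split; [|split; [|split]].
      * intro; contradiction.
      * intro; contradiction.
      * intros R HR Heq. exfalso; apply (H3 R HR Heq).
      * intros _ _ _. exists []. split; [apply is_update_nil|]. split; auto.
        rewrite app_nil_r. apply der_fact; auto.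
    + assert (HXn : X <> []) by (intro Hx; rewrite Hx in He; inversion He).
      destruct (proj1 (HUI e) (HX e He)) as [-> | (P & os & HP & Hl & Hcd & ->)].
      * simpl. split; [|split; [|split]].
        -- auto.
        -- intro; contradiction.
        -- intros R HR Heq. exfalso. apply (proj1 (psi_ne _ _ _ _ _ _ Hc HR)). auto.
        -- intros _ H; contradiction.
      * simpl. rewrite ev_const_args.
        destruct (tedb_props _ _ HP) as (Ht & Hpd & Hpp).
        apply Inv_plain; auto. exists [Atom P (map OConst os ++ [TConst (tin + 1)])].
        split; [apply upd_fact; auto; lia|]. split; [intro; contradiction|].
        apply (der_fact_eq _ _ (Atom P (map OConst os ++ [TConst (tin + 1)])) ov tv).
        -- apply in_or_app; right; simpl; auto.
        -- reflexivity.
        -- simpl. rewrite ev_const_args. reflexivity.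
  - destruct (CP_cases _ _ _ _ _ Hr) as [(r0 & Hr0 & ->) | [-> | [-> | (P & HP & [-> | ->])]]].
    +
      assert (HG : forall b, In b (rbody r0) -> G Q D tin X (apred b) (map (ev ov tv) (aargs b))).
      { intros b Hb0. assert (Hi : In (ren_atom psi b) (rbody (ren_rule psi r0)))
          by (simpl; apply in_map; auto).
        specialize (IH _ Hi). simpl in IH. unfold ren_pred in IH.
        pose proof (body_in_preds _ _ _ Hr0 Hb0) as Hbp.
        destruct (is_temporal_edb (apred b)) eqn:Et.
        - apply (proj1 (proj2 (proj2 IH)) (apred b)); auto. apply in_tedb; auto.
        - destruct (crit_ne _ _ _ _ _ _ Hc Hbp) as (H1 & H2 & H3).
          apply (proj2 (proj2 (proj2 IH))); auto. }
      destruct (combineU _ _ _ _ _ _ _ HG) as (U & Hu & Hx & Hd).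
      assert (HG2 : G Q D tin X (apred (rhead r0)) (map (ev ov tv) (aargs (rhead r0)))).
      { exists U. split; auto. split; auto. apply der_rule; auto. }
      simpl. unfold ren_pred.
      pose proof (head_in_preds _ _ Hr0) as Hhp.
      destruct (is_temporal_edb (apred (rhead r0))) eqn:Et.
      * apply Inv_psi; auto. apply in_tedb; auto.
      * apply Inv_plain; auto.
    +
      specialize (IH _ (or_introl eq_refl)). simpl in IH |- *.
      destruct (proj1 IH eq_refl) as [HXn Heq]. injection Heq as Heq.
      split; [|split; [|split]].
      * intro Hq. exfalso; auto.
      * intros _. split; auto. exists (tv 0). rewrite Heq. split; auto. lia.
      * intros R HR Hq. exfalso. apply (proj2 (psi_ne _ _ _ _ _ _ Hc HR)). auto.
      * intros _ _ H; contradiction.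
    +
      specialize (IH _ (or_introl eq_refl)). simpl in IH |- *.
      destruct (proj1 (proj2 IH) eq_refl) as [HXn (z & Heq & Hz)]. injection Heq as Heq.
      split; [|split; [|split]].
      * intro Hq. exfalso; auto.
      * intros _. split; auto. exists (tv O + 1)%Z. split; auto. lia.
      * intros R HR Hq. exfalso. apply (proj2 (psi_ne _ _ _ _ _ _ Hc HR)). auto.
      * intros _ _ H; contradiction.
    +
      specialize (IH _ (or_introl eq_refl)). simpl in IH |- *.
      destruct (tedb_props _ _ HP) as (Ht & Hpd & Hpp).
      destruct (crit_ne _ _ _ _ _ _ Hc Hpp) as (H1 & H2 & H3).
      apply Inv_psi; auto. apply (proj2 (proj2 (proj2 IH))); auto.
    +
      pose proof (IH _ (or_introl eq_refl)) as IHV. pose proof (IH _ (or_intror (or_introl eq_refl))) as IHP.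
      simpl in IHV, IHP |- *.
      destruct (proj1 (proj2 IHV) eq_refl) as [HXn (z & Heq & Hz)]. injection Heq as Heq.
      destruct (proj1 (proj2 (proj2 IHP)) P HP eq_refl) as (U & Hu & Hx & Hd).
      destruct (tedb_props _ _ HP) as (Ht & Hpd & Hpp).
      apply Inv_psi; auto.
      set (nf := Atom P (map OConst (map ov (seq 0 (arity P - 1))) ++ [TConst (tv O + 1)%Z])).
      exists (U ++ [nf]). split.
      * apply is_update_app; auto. apply upd_fact; auto.
        -- rewrite length_map, length_seq. reflexivity.
        -- lia.
      * split; [intro; contradiction|].
        apply (der_fact_eq _ _ nf ov tv).
        -- apply in_or_app; right; apply in_or_app; right; simpl; auto.
        -- reflexivity.
        -- unfold nf; simpl. rewrite ev_const_args, ev_ovars. simpl. rewrite map_map. reflexivity.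
Qed.

Definition fmapv (f : nat -> nat) (v : nat + Z) : nat + Z :=
  match v with inl o => inl (f o) | inr z => inr z end.

Lemma ev_hom f ov tv args : (forall o, In (OConst o) args -> f o = o) ->
  map (ev (fun x => f (ov x)) tv) args = map (fmapv f) (map (ev ov tv) args).
Proof.
  induction args as [|t args IH]; intro H; simpl; auto.
  f_equal.
  - destruct t; simpl; auto. rewrite H; simpl; auto.
  - apply IH. intros o Ho. apply H. simpl; auto.
Qed.

Lemma fix_const f ov tv args : Forall is_const_term args ->
  (forall o, In (OConst o) args -> f o = o) ->
  map (fmapv f) (map (ev ov tv) args) = map (ev ov tv) args.
Proof.
  induction args as [|t args IH]; intros Hc H; simpl; auto.
  inversion Hc; subst. f_equal.
  - destruct t; simpl in *; try contradiction; auto; rewrite H; simpl; auto.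
  - apply IH; auto. intros o Ho. apply H. simpl; auto.
Qed.

Lemma fmapv_app f os z : map (fmapv f) (map inl os ++ [inr z]) = map inl (map f os) ++ [inr z].
Proof. rewrite map_app, !map_map. reflexivity. Qed.

Lemma ren_hom Q A V psi f E F :
  (forall o, obj_in_prog o (qprog Q) -> f o = o) ->
  (forall e ov tv, In e E -> In (apred e) (prog_preds (qprog Q)) ->
     der (critical_program Q A V psi) F (ren_pred psi (apred e)) (map (fmapv f) (map (ev ov tv) (aargs e)))) ->
  forall P vals, der (qprog Q) E P vals -> In P (prog_preds (qprog Q)) ->
  der (critical_program Q A V psi) F (ren_pred psi P) (map (fmapv f) vals).
Proof.
  intros Hf Hbase P vals H. induction H as [e ov tv He | r ov tv Hr Hb IH]; intro HP.
  - apply Hbase; auto.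
  - apply (der_rule_eq _ _ (ren_rule psi r) (fun x => f (ov x)) tv).
    + apply CP_ren; auto.
    + intros b' Hb'. simpl in Hb'. apply in_map_iff in Hb' as (b & <- & Hbb).
      simpl. rewrite (ev_hom f ov tv).
      * apply IH; auto. eapply body_in_preds; eauto.
      * intros o Ho. apply Hf. exists r. split; auto. exists b. split; [simpl; auto|]. exact Ho.
    + reflexivity.
    + simpl. rewrite (ev_hom f ov tv); [reflexivity|].
      intros o Ho. apply Hf. exists r. split; auto. exists (rhead r). split; [simpl; auto|]. exact Ho.
Qed.

Lemma baseD Q D A V psi f F : is_dataset D ->
  (forall o, obj_in_data o D -> f o = o) -> (forall e, In e D -> In e F) ->
  forall e ov tv, In e D -> In (apred e) (prog_preds (qprog Q)) ->
  der (critical_program Q A V psi) F (ren_pred psi (apred e)) (map (fmapv f) (map (ev ov tv) (aargs e))).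
Proof.
  intros HD Hf HF e ov tv He Hp.
  pose proof (proj1 (Forall_forall _ _) HD e He) as [Hfact Hpd].
  rewrite fix_const; [| apply Hfact | intros o Ho; apply Hf; exists e; auto].
  unfold ren_pred. destruct (is_temporal_edb (apred e)) eqn:Et.
  - assert (HT : In (apred e) (tedb_preds (qprog Q))) by (apply in_tedb; auto).
    destruct (tedb_props _ _ HT) as (Ht & _ & _).
    destruct (fact_struct e Hfact Ht) as (os & z & Ha & Hl).
    rewrite Ha, ev_const_args. apply copy1_app; auto.
    apply (der_fact_eq _ _ e ov tv); auto. rewrite Ha, ev_const_args. reflexivity.
  - apply der_fact; auto.
Qed.

Lemma baseU Q D tin oI A V psi UI U f : critical_preds Q D A V psi ->
  is_critical_update Q D tin oI A UI -> is_update tin U ->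
  (forall o, in_crit_dom Q D oI (f o)) ->
  forall e ov tv, In e U -> In (apred e) (prog_preds (qprog Q)) ->
  der (critical_program Q A V psi) (D ++ UI) (ren_pred psi (apred e)) (map (fmapv f) (map (ev ov tv) (aargs e))).
Proof.
  intros Hc HUI [HUd HUt] Hf e ov tv He Hp.
  pose proof (proj1 (Forall_forall _ _) HUd e He) as [Hfact Hpd].
  destruct (HUt e He) as [Ht (z' & Hlast & Hz')].
  assert (Et : is_temporal_edb (apred e) = true) by (unfold is_temporal_edb; rewrite Ht, Hpd; reflexivity).
  assert (HT : In (apred e) (tedb_preds (qprog Q))) by (apply in_tedb; auto).
  unfold ren_pred. rewrite Et.
  destruct (fact_struct e Hfact Ht) as (os & z & Ha & Hl).
  rewrite Ha, last_last in Hlast. injection Hlast as <-.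
  rewrite Ha, ev_const_args, fmapv_app.
  assert (HUIf : In (Atom (apred e) (map OConst (map f os) ++ [TConst (tin + 1)])) UI).
  { apply HUI. right. exists (apred e), (map f os). split; auto. split.
    - rewrite length_map; auto.
    - split; auto. apply Forall_forall. intros o Ho. apply in_map_iff in Ho as (o' & <- & _). auto. }
  assert (HAf : In (Atom A [TConst (tin + 1)]) UI) by (apply HUI; left; reflexivity).
  assert (Hl' : length (map f os) = arity (apred e) - 1) by (rewrite length_map; auto).
  assert (H0 : der (critical_program Q A V psi) (D ++ UI) (psi (apred e)) (map inl (map f os) ++ [inr (tin + 1)%Z])).
  { apply copy1_app; auto. apply (der_fact_eq _ _ _ ov tv _ _ (in_or_app _ _ _ (or_intror HUIf))); auto.
    simpl. rewrite ev_const_args. reflexivity. }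
  assert (HVa : forall n, der (critical_program Q A V psi) (D ++ UI) V [inr (tin + 1 + Z.of_nat n)%Z]).
  { apply V_all. apply V_of_A. apply (der_fact_eq _ _ _ ov tv _ _ (in_or_app _ _ _ (or_intror HAf))); auto. }
  pose proof (psi_all _ _ _ _ _ _ _ _ HT Hl' HVa H0 (Z.to_nat (z - (tin + 1)))) as Hres.
  rewrite Z2Nat.id in Hres by lia. replace (tin + 1 + (z - (tin + 1)))%Z with z in Hres by lia.
  exact Hres.
Qed.

Lemma safety Q D : program_wf (qprog Q) -> is_dataset D ->
  forall P vals, der (qprog Q) D P vals ->
  forall o, In (inl o) vals -> obj_in_prog o (qprog Q) \/ obj_in_data o D.
Proof.
  intros Hwf HD P vals H. induction H as [e ov tv He | r ov tv Hr Hb IH]; intros o Ho.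
  - pose proof (proj1 (Forall_forall _ _) HD e He) as [[_ Hc] _].
    apply in_map_iff in Ho as (t & Ht & Hin).
    pose proof (proj1 (Forall_forall _ _) Hc t Hin) as Htc.
    destruct t; simpl in *; try contradiction; try discriminate.
    injection Ht as ->. right. exists e. split; auto.
  - apply in_map_iff in Ho as (t & Ht & Hin).
    destruct t; simpl in Ht; try discriminate; injection Ht as <-.
    + left. exists r. split; auto. exists (rhead r). split; simpl; auto.
    + pose proof (proj1 (Forall_forall _ _) Hwf r Hr) as (_ & _ & Hv).
      destruct (Hv (SObj, x)) as (b & Hbb & Hbv).
      { unfold atom_vars. apply in_flat_map. exists (OVar x). simpl; auto. }
      unfold atom_vars in Hbv. apply in_flat_map in Hbv as (t' & Ht' & Htv).
      destruct t'; simpl in Htv; try contradiction; destruct Htv as [Htv|[]]; try discriminate.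
      injection Htv as <-.
      apply (IH b Hbb). apply in_map_iff. exists (OVar x0). split; auto.
Qed.

Definition hmap Q D oI (o : nat) : nat :=
  if excluded_middle_informative (in_crit_dom Q D oI o) then o else oI.

Lemma hmap_crit Q D oI o : in_crit_dom Q D oI (hmap Q D oI o).
Proof. unfold hmap. destruct excluded_middle_informative; auto. right; right; auto. Qed.

Lemma hmap_fix Q D oI o : in_crit_dom Q D oI o -> hmap Q D oI o = o.
Proof. unfold hmap. destruct excluded_middle_informative; auto. contradiction. Qed.

Lemma map_fmapv_id l : map (fmapv (fun o => o)) l = l.
Proof. induction l as [|[] l IH]; simpl; f_equal; auto. Qed.

Theorem lemma2 (Q : query) (D : dataset) (tin tout : Z)
  (HI : dtp_instance Q D tin tout)
  (oI : nat) (HoI : fresh_obj Q D oI)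
  (A V : pred) (psi : pred -> pred) (Hpreds : critical_preds Q D A V psi)
  (UI : dataset) (HUI : is_critical_update Q D tin oI A UI) :
  dtp_holds Q D tin tout <->
  (forall os : list nat,
     length os = arity (qpred Q) - 1 ->
     Forall (in_crit_dom Q D oI) os ->
     answer (critical_query Q A V psi) (D ++ UI) tout os ->
     answer (critical_query Q A V psi) D tout os).
Proof.
  destruct HI as [[[Hwf [Hidb Hqp]] Htq] [[HD Hhist] Hle]].
  assert (Hren : ren_pred psi (qpred Q) = qpred Q).
  { unfold ren_pred, is_temporal_edb. rewrite Hidb, andb_false_r. reflexivity. }
  destruct (crit_ne _ _ _ _ _ _ Hpreds Hqp) as (HqA & HqV & Hqpsi).
  split.
  - intros Hdtp os Hl Hcd Hans.
    apply answer_iff in Hans as [_ Hder]. simpl in Hder.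
    pose proof (unren _ _ _ _ _ _ _ _ _ Hpreds HUI (fun e H => H) _ _ Hder) as Hinv.
    destruct (proj2 (proj2 (proj2 Hinv)) Hqpsi HqA HqV) as (U & Hu & _ & HdU).
    assert (HaU : answer Q (D ++ U) tout os) by (apply answer_iff; auto).
    apply (Hdtp U Hu os) in HaU. apply answer_iff in HaU as [_ HdD].
    apply answer_iff. split; auto. simpl.
    pose proof (ren_hom Q A V psi (fun o => o) D D (fun o _ => eq_refl)
      (baseD Q D A V psi (fun o => o) D HD (fun o _ => eq_refl) (fun e H => H))
      _ _ HdD Hqp) as Hr.
    rewrite Hren, map_fmapv_id in Hr. exact Hr.
  - intros Hcond U Hu os. split.
    + intros Ha. apply answer_iff in Ha as [Hl Hd]. apply answer_iff. split; auto.
      eapply der_mono; [|exact Hd]. intros e He; apply in_or_app; auto.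
    + intros Ha. apply answer_iff in Ha as [Hl Hd].
      set (h := hmap Q D oI).
      assert (Hbase : forall e ov tv, In e (D ++ U) -> In (apred e) (prog_preds (qprog Q)) ->
        der (critical_program Q A V psi) (D ++ UI) (ren_pred psi (apred e))
          (map (fmapv h) (map (ev ov tv) (aargs e)))).
      { intros e ov tv He Hp. apply in_app_or in He as [He|He].
        - apply (baseD Q D A V psi); auto.
          + intros o Ho. apply hmap_fix. right; left; auto.
          + intros e' H'; apply in_or_app; auto.
        - eapply baseU; eauto. intro o. apply hmap_crit. }
      pose proof (ren_hom Q A V psi h (D ++ U) (D ++ UI)
        (fun o Ho => hmap_fix Q D oI o (or_introl Ho)) Hbase _ _ Hd Hqp) as Hr.
      rewrite Hren, fmapv_app in Hr.
      assert (Ha' : answer (critical_query Q A V psi) (D ++ UI) tout (map h os)).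
      { apply answer_iff. split; auto. rewrite length_map; auto. }
      apply Hcond in Ha'.
      2: { rewrite length_map; auto. }
      2: { apply Forall_forall. intros o Ho. apply in_map_iff in Ho as (o' & <- & _). apply hmap_crit. }
      apply answer_iff in Ha' as [_ HdD]. simpl in HdD.
      rewrite <- (app_nil_r D) in HdD.
      pose proof (unren _ _ _ _ _ _ _ _ [] Hpreds HUI (fun e H => match H with end) _ _ HdD) as Hinv.
      destruct (proj2 (proj2 (proj2 Hinv)) Hqpsi HqA HqV) as (U' & _ & HU' & HdQ).
      rewrite (HU' eq_refl), app_nil_r in HdQ.
      assert (Hmo : map h os = os).
      { rewrite <- (map_id os) at 2. apply map_ext_in. intros o Ho.
        assert (Hs : obj_in_prog (h o) (qprog Q) \/ obj_in_data (h o) D).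
        { apply (safety Q D Hwf HD _ _ HdQ). apply in_or_app; left.
          apply in_map. apply in_map. auto. }
        unfold h, hmap in *. destruct excluded_middle_informative; auto.
        destruct HoI as [Hf1 Hf2]. destruct Hs; contradiction. }
      rewrite Hmo in HdQ. apply answer_iff; auto.
Qed.
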